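(* Let $f\in\mathcal{F}_k$. Then the set $\mathcal{V}=\{-1,0,1\}^k$ is representative for the Lovász hinge $L^f$, i.e., for every $p\in\Delta_\mathcal{Y}$, $\arg\min_{u\in\mathbb{R}^k}\sum_{y\in\mathcal{Y}}p_yL^f(u,y)\cap\mathcal{V}\neq\emptyset$.
   Context: $[k]=\{1,\dots,k\}$, $\mathcal{Y}=\{-1,1\}^k$, $\Delta_\mathcal{Y}$ the probability distributions on $\mathcal{Y}$. $u\odot u'$ entrywise product, $\mathbbm{1}$ all-ones vector, $(x)_+$ entrywise positive part. $\mathcal{F}_k$: set functions $f:2^{[k]}\to\mathbb{R}$ that are submodular ($f(S)+f(T)\ge f(S\cup T)+f(S\cap T)$), increasing ($f(S\cup T)\ge f(S)$ for disjoint $S,T$) and normalized ($f(\emptyset)=0$). Lovász extension $F(x)=\max_\pi\sum_{i=1}^k x_{\pi_i}(f(\{\pi_1,\dots,\pi_i\})-f(\{\pi_1,\dots,\pi_{i-1}\}))$ for $x\in\mathbb{R}^k_+$ (max over permutations of $[k]$); Lovász hinge $L^f(u,y)=F((\mathbbm{1}-u\odot y)_+)$. *)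

(* Defs.v *)
From mathcomp Require Import all_boot all_order all_algebra all_fingroup.
From mathcomp Require Import reals.
Set Implicit Arguments. Unset Strict Implicit. Unset Printing Implicit Defensive.
Import Order.TTheory GRing.Theory Num.Theory.
Local Open Scope ring_scope.

Section Defs.
Variables (R : realType) (k : nat).

Definition submodular (f : {set 'I_k} -> R) : Prop :=
  forall S T : {set 'I_k}, f (S :|: T) + f (S :&: T) <= f S + f T.
Definition increasing (f : {set 'I_k} -> R) : Prop :=
  forall S T : {set 'I_k}, [disjoint S & T] -> f S <= f (S :|: T).
Definition normalized (f : {set 'I_k} -> R) : Prop := f set0 = 0.
Definition in_Fk (f : {set 'I_k} -> R) : Prop :=
  [/\ submodular f, increasing f & normalized f].

Definition lovasz_term (f : {set 'I_k} -> R) (x : 'I_k -> R) (s : 'S_k) : R :=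
  \sum_(i < k) x (s i) *
    (f [set s j | j in [pred j : 'I_k | (j <= i)%N]]
     - f [set s j | j in [pred j : 'I_k | (j < i)%N]]).

Definition lovasz_ext (f : {set 'I_k} -> R) (x : 'I_k -> R) : R :=
  \big[Num.max/lovasz_term f x 1%g]_(s : 'S_k) lovasz_term f x s.

(* labels y in {-1,1}^k, encoded by booleans: true = 1, false = -1 *)
Definition sgn (b : bool) : R := if b then 1 else -1.

Definition lovasz_hinge (f : {set 'I_k} -> R) (u : 'I_k -> R)
    (y : {ffun 'I_k -> bool}) : R :=
  lovasz_ext f (fun i => Num.max 0 (1 - u i * sgn (y i))).

Definition exp_loss (f : {set 'I_k} -> R) (p : {ffun {ffun 'I_k -> bool} -> R})
    (u : 'I_k -> R) : R :=
  \sum_(y : {ffun 'I_k -> bool}) p y * lovasz_hinge f u y.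

Definition is_distribution (p : {ffun {ffun 'I_k -> bool} -> R}) : Prop :=
  (forall y, 0 <= p y) /\ \sum_y p y = 1.

Definition in_V (v : 'I_k -> R) : Prop := forall i, v i \in [:: -1; 0; 1].
End Defs.

(* Main.v *)
Require Import Defs.
From mathcomp Require Import all_boot all_order all_algebra all_fingroup.
From mathcomp Require Import reals.
From mathcomp Require Import ring lra zify.
Import Order.TTheory GRing.Theory Num.Theory.
Local Open Scope ring_scope.
Set Implicit Arguments. Unset Strict Implicit. Unset Printing Implicit Defensive.

Section Greedy.
Variables (R : realType) (k : nat) (f : {set 'I_k} -> R).
Hypothesis hsub : submodular f.
Hypothesis hinc : increasing f.

Definition PS (s : 'S_k) (n : nat) : {set 'I_k} :=
  [set s j | j in [pred j : 'I_k | (j < n)%N]].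
Definition dd (s : 'S_k) (i : 'I_k) := f (PS s i.+1) - f (PS s i).

Lemma termE x s : lovasz_term f x s = \sum_(i < k) x (s i) * dd s i.
Proof. by []. Qed.

Lemma memPS s n y : (y \in PS s n) = ((s^-1)%g y < n)%N.
Proof.
apply/imsetP/idP.
  by case=> j; rewrite inE => jn ->; rewrite permK.
by move=> h; exists ((s^-1)%g y); rewrite ?inE ?permKV.
Qed.

Lemma PS_k s : PS s k = setT.
Proof. by apply/setP=> y; rewrite memPS in_setT ltn_ord. Qed.

Lemma PS_0 s : PS s 0 = set0.
Proof. by apply/setP=> y; rewrite memPS in_set0. Qed.

Lemma PS_S s (i : 'I_k) : PS s i.+1 = PS s i :|: [set s i].
Proof.
apply/setP=> y; rewrite in_setU in_set1 !memPS ltnS leq_eqVlt.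
rewrite orbC; congr (_ || _).
by apply/eqP/eqP => [/val_inj <-|->]; rewrite ?permKV ?permK.
Qed.

Lemma dd_ge0 s i : 0 <= dd s i.
Proof.
rewrite /dd subr_ge0 PS_S.
apply: hinc; rewrite disjoint_sym disjoints1 memPS permK ltnn //.
Qed.

Definition hh (s : 'S_k) (T : {set 'I_k}) := \sum_(i < k) (if s i \in T then dd s i else 0).

Lemma hh_le s T : hh s T <= f T - f set0.
Proof.
pose g n := f (PS s n :&: T).
have -> : f T - f set0 = g k - g 0 by rewrite /g PS_k PS_0 setTI set0I.
rewrite -(telescope_sumr g (leq0n k)) big_mkord; apply: ler_sum => i _.
rewrite /g /dd.
have e1 := PS_S s i.
case: ifP => siT.
  have := hsub (PS s i) (PS s i.+1 :&: T).
  have -> : PS s i :|: PS s i.+1 :&: T = PS s i.+1.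
    rewrite e1 setUIr setUA setUid; apply/setIidPl; apply/subsetP=> y; rewrite !inE.
    by case/orP=> [->|/eqP ->] //; rewrite siT orbT.
  have -> : PS s i :&: (PS s i.+1 :&: T) = PS s i :&: T.
    by rewrite setIA e1 (setIidPl (subsetUl _ _)).
  move=> h; lra.
have -> : PS s i.+1 :&: T = PS s i :&: T.
  by rewrite e1 setIUl (_ : [set s i] :&: T = set0) ?setU0 //; apply/setP=> y;
     rewrite !inE; case: eqP => // ->; rewrite siT.
by rewrite subrr.
Qed.

Lemma hh_eq (s : 'S_k) (T : {set 'I_k}) : (forall i : 'I_k, s i \in T -> PS s i.+1 \subset T) ->
  hh s T = f T - f set0.
Proof.
move=> hT.
pose g n := f (PS s n :&: T).
have -> : f T - f set0 = g k - g 0 by rewrite /g PS_k PS_0 setTI set0I.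
rewrite -(telescope_sumr g (leq0n k)) big_mkord; apply: eq_bigr => i _.
rewrite /g /dd.
have e1 := PS_S s i.
case: ifP => siT.
  have h1 := hT i siT.
  rewrite (setIidPl h1) (setIidPl (subset_trans _ h1)) // e1 subsetUl //.
have -> : PS s i.+1 :&: T = PS s i :&: T.
  by rewrite e1 setIUl (_ : [set s i] :&: T = set0) ?setU0 //; apply/setP=> y;
     rewrite !inE; case: eqP => // ->; rewrite siT.
by rewrite subrr.
Qed.

Definition sortedp (sg : 'S_k) (x : 'I_k -> R) :=
  forall i j : 'I_k, (i <= j)%N -> x (sg j) <= x (sg i).

Lemma greedy x sg s : sortedp sg x -> lovasz_term f x s <= lovasz_term f x sg.
Proof.
move=> hs.
pose z n := if (insub n : option 'I_k) is Some i then x (sg i) else 0.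
pose lam n := z n - z n.+1.
have zk : z k = 0 by rewrite /z insubN // ltnn.
have zi (i : 'I_k) : z i = x (sg i) by rewrite /z valK.
have dec (t : 'S_k) i : x (t i) =
    \sum_(m < k) (if t i \in PS sg m.+1 then lam m else 0).
  set j := ((sg^-1)%g (t i)).
  under eq_bigr do rewrite memPS ltnS -/j.
  rewrite -(big_mkord xpredT (fun m => if (j <= m)%N then lam m else 0)).
  rewrite (@big_cat_nat _ _ _ j) ?leq0n ?(ltnW (ltn_ord j)) //=.
  rewrite big_nat_cond big1 ?add0r; last first.
    by move=> m /andP[/andP[_ mj] _]; rewrite leqNgt mj.
  rewrite (eq_big_nat _ _ (F2 := fun m => - (z m.+1 - z m))); last first.
    by move=> m /andP[-> _]; rewrite opprB.
  rewrite sumrN telescope_sumr ?(ltnW (ltn_ord j)) // zk sub0r opprK zi /j.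
  by rewrite permKV.
have termdec (t : 'S_k) :
    lovasz_term f x t = \sum_(m < k) lam m * hh t (PS sg m.+1).
  rewrite termE; under eq_bigr do rewrite dec mulr_suml.
  rewrite exchange_big; apply: eq_bigr => m _; rewrite /hh mulr_sumr.
  by apply: eq_bigr => i _; case: ifP => _; rewrite ?mul0r ?mulr0.
rewrite !termdec; apply: ler_sum => m _.
have hsg : hh sg (PS sg m.+1) = f (PS sg m.+1) - f set0.
  apply: hh_eq => i; rewrite memPS permK => im; apply/subsetP=> y.
  by rewrite !memPS => yi; exact: leq_trans yi im.
case: (ltnP m.+1 k) => hm.
  have lam0 : 0 <= lam m.
    rewrite /lam (zi m) (_ : m.+1 = Ordinal hm) // zi subr_ge0.
    by apply: hs => /=.
  by rewrite hsg; apply: ler_wpM2l => //; exact: hh_le.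
have -> : m.+1 = k by apply/eqP; rewrite eqn_leq hm ltn_ord.
rewrite PS_k !hh_eq // => i _; exact: subsetT.
Qed.

Lemma ext_ge x s : lovasz_term f x s <= lovasz_ext f x.
Proof.
rewrite /lovasz_ext (bigD1 s) //= le_max lexx //.
Qed.

Lemma ext_le x c : (forall s, lovasz_term f x s <= c) -> lovasz_ext f x <= c.
Proof.
move=> h; rewrite /lovasz_ext; elim/big_ind: _ => //.
by move=> a b ha hb; rewrite ge_max ha hb.
Qed.

Lemma ext_greedy x sg : sortedp sg x -> lovasz_ext f x = lovasz_term f x sg.
Proof.
move=> h; apply/eqP; rewrite eq_le ext_ge andbT.
by apply: ext_le => s; exact: greedy.
Qed.

Lemma ext_mono x x' : (forall i, x i <= x' i) -> lovasz_ext f x <= lovasz_ext f x'.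
Proof.
move=> h; apply: ext_le => s; apply: le_trans (ext_ge x' s).
rewrite !termE; apply: ler_sum => i _; apply: ler_wpM2r; [exact: dd_ge0|exact: h].
Qed.

Lemma term_lin x x' a b s :
  lovasz_term f (fun i => a * x i + b * x' i) s =
  a * lovasz_term f x s + b * lovasz_term f x' s.
Proof.
rewrite !termE !mulr_sumr -big_split /=; apply: eq_bigr => i _; ring.
Qed.

Lemma sort_ex (x : 'I_k -> R) : exists sg : 'S_k, sortedp sg x.
Proof.
pose r := fun i j : 'I_k => x j <= x i.
pose l := sort r (enum 'I_k).
have hl : size l = k by rewrite size_sort size_enum_ord.
have ul : uniq l by rewrite sort_uniq enum_uniq.
have tr : transitive r by move=> a b c hab hbc; rewrite /r (le_trans hbc hab).
have tot : total r by move=> a b; rewrite /r le_total.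
have so : sorted r l by apply: sort_sorted.
pose g (i : 'I_k) := nth i l i.
have gi : injective g.
  move=> i j; rewrite /g (set_nth_default i j) ?hl // => /eqP.
  by rewrite nth_uniq ?hl // => /eqP/val_inj.
exists (perm gi) => i j ij; rewrite !permE /g (set_nth_default i j) ?hl //.
have := sorted_leq_nth tr (fun a => lexx (x a)) i so.
by move=> H; apply: (H i j) => //; rewrite inE hl.
Qed.

End Greedy.
Lemma classify (R : realType) (a b t w : R) :
  0 <= b -> b < a ->
  `|w| <= 1 -> (`|w| < a -> `|w| <= b) -> (a < `|w| -> `|w| = 1) ->
  (w = a /\ w * (if `|w| == a then t / a else 1) = t) \/
  (w = - a /\ w * (if `|w| == a then t / a else 1) = - t) \/
  ((- b <= w <= b \/ w = 1 \/ w = -1) /\ w * (if `|w| == a then t / a else 1) = w).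
Proof.
move=> b0 ba h1 ha hb.
have a0 : a != 0 by rewrite gt_eqF //; lra.
case: eqP => e.
  case: (lerP 0 w) => s.
    left; rewrite (ger0_norm s) in e; rewrite e mulrC divfK //.
  right; left; rewrite (ltr0_norm s) in e; rewrite -(opprK w) e mulNr mulrC divfK //.
right; right; split; last by rewrite mulr1.
move: e ha hb h1; case: (lerP 0 w) => s;
  rewrite ?(ger0_norm s) ?(ltr0_norm s) => e ha hb h1.
  case: (ltrgtP w a) => [/ha|/hb|]; try lra; done.
case: (ltrgtP (- w) a) => [/ha|/hb|]; try lra; done.
Qed.

Lemma mono_aux (R : realType) (a b t w1 w2 : R) :
  0 <= b -> b < a -> a < 1 -> b <= t -> t <= 1 ->
  `|w1| <= 1 -> (`|w1| < a -> `|w1| <= b) -> (a < `|w1| -> `|w1| = 1) ->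
  `|w2| <= 1 -> (`|w2| < a -> `|w2| <= b) -> (a < `|w2| -> `|w2| = 1) ->
  w1 <= w2 ->
  w1 * (if `|w1| == a then t / a else 1) <= w2 * (if `|w2| == a then t / a else 1).
Proof.
move=> b0 ba a1 bt t1 h1 h1a h1b h2 h2a h2b w12.
have := @classify _ a b t w1 b0 ba h1 h1a h1b.
have := @classify _ a b t w2 b0 ba h2 h2a h2b.
lra.
Qed.

Lemma exmax (R : realType) (T : finType) (P : pred T) (g : T -> R) :
  (exists i, P i) -> exists i, P i /\ forall j, P j -> g j <= g i.
Proof.
case=> i0 Pi0; have [i Pi h] := arg_maxP g Pi0.
by exists i; split.
Qed.

Section Main.
Variables (R : realType) (k : nat) (f : {set 'I_k} -> R).
Variable (p : {ffun {ffun 'I_k -> bool} -> R}).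
Hypothesis hsub : submodular f.
Hypothesis hinc : increasing f.
Hypothesis hp : forall y, 0 <= p y.

Definition box (u : 'I_k -> R) := forall i, `|u i| <= 1.
Definition xx (u : 'I_k -> R) (y : {ffun 'I_k -> bool}) (i : 'I_k) :=
  Num.max 0 (1 - u i * sgn R (y i)).

Lemma phiE u : exp_loss f p u = \sum_y p y * lovasz_ext f (xx u y).
Proof. by []. Qed.

Lemma norm_sgn b : `|sgn R b| = 1.
Proof. by case: b; rewrite /sgn ?normr1 ?normrN1. Qed.

Lemma xx_box u y i : `|u i| <= 1 -> xx u y i = 1 - u i * sgn R (y i).
Proof.
move=> h; rewrite /xx; apply/max_idPr; rewrite subr_ge0.
by apply: le_trans (ler_norm _) _; rewrite normrM norm_sgn mulr1.
Qed.

Lemma max_aux (A B : R) : (A <= 0 \/ A <= B) -> Num.max 0 A <= Num.max 0 B.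
Proof.
rewrite ge_max le_max lexx /= le_max => -[->|->] //; by rewrite orbT.
Qed.

Definition clip (u : 'I_k -> R) i :=
  if u i < -1 then -1 else if 1 < u i then 1 else u i.

Lemma clip_box u : box (clip u).
Proof.
move=> i; rewrite /clip ler_norml.
case: (ltP (u i) (-1)) => h1; case: (ltP 1 (u i)) => h2; apply/andP; split; lra.
Qed.

Lemma clip_le u : exp_loss f p (clip u) <= exp_loss f p u.
Proof.
rewrite !phiE; apply: ler_sum => y _; apply: ler_wpM2l => //.
apply: (ext_mono hinc) => i; rewrite /xx /clip; apply: max_aux.
case: (y i); rewrite /sgn ?mulr1 ?mulrN1;
case: (ltP (u i) (-1)) => h1; case: (ltP 1 (u i)) => h2; lra.
Qed.

Definition enc (w : {ffun 'I_k -> 'I_3}) : 'I_k -> R := fun i => (w i)%:R - 1.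

Lemma phi_congr u u' : (forall i, u i = u' i) ->
  exp_loss f p u = exp_loss f p u'.
Proof. by move=> h; have -> : u = u' by apply: boolp.funext. Qed.

Lemma base u : box u -> (forall i, ~~ ((0 < `|u i|) && (`|u i| < 1))) ->
  exists w, exp_loss f p (enc w) <= exp_loss f p u.
Proof.
move=> hu hn.
have hv i : u i = -1 \/ u i = 0 \/ u i = 1.
  have := hu i; have := hn i; rewrite negb_and -!leNgt.
  case: (lerP 0 (u i)) => s; rewrite ?(ger0_norm s) ?(ltr0_norm s) =>
    /orP[h|h] h'; lra.
exists [ffun i => if u i == -1 then @Ordinal 3 0 isT
                  else if u i == 0 then @Ordinal 3 1 isT else @Ordinal 3 2 isT].
rewrite le_eqVlt; apply/orP; left; apply/eqP; apply: phi_congr => i.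
rewrite /enc ffunE.
case: eqP => [->|e1] /=; first by rewrite sub0r.
case: eqP => [->|e2] /=; first by rewrite subrr.
case: (hv i) => [//|[//|->]]; lra.
Qed.


Lemma main_ind n : forall u (l : seq R), box u -> (size l <= n)%N ->
  (forall i, (0 < `|u i|) && (`|u i| < 1) -> `|u i| \in l) ->
  exists w, exp_loss f p (enc w) <= exp_loss f p u.
Proof.
elim: n => [|n IH] u l hu hl hcov.
  apply: base => // i; apply/negP => /hcov.
  by move: hl; rewrite leqn0 => /nilP ->.
case: (boolP [exists i, (0 < `|u i|) && (`|u i| < 1)]); last first.
  by move=> /existsPn nex; apply: base.
move=> /existsP ex.
have [i1 [Pi1 hmax]] := exmax (fun i => `|u i|) ex.
set a := `|u i1| in Pi1 hmax.
have [a0 a1] : 0 < a /\ a < 1 by move: Pi1 => /andP[].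
have habove j : a < `|u j| -> `|u j| = 1.
  move=> aj; have := hu j; case: (ltrgtP `|u j| 1) => // h1 _.
  have : `|u j| <= a by apply: hmax; rewrite h1 andbT; lra.
  lra.
have [b [b0 [ba [hbelow hbex]]]] : exists b, 0 <= b /\ b < a /\
    (forall j, `|u j| < a -> `|u j| <= b) /\ (b = 0 \/ exists j, `|u j| = b).
  case: (boolP [exists j, `|u j| < a]) => [/existsP ex2|/existsPn nex2].
    have [j1 [Pj1 hm2]] := exmax (fun j => `|u j|) ex2.
    exists `|u j1|; split => //; split => //; split => //.
    by right; exists j1.
  exists 0; split => //; split => //; split; last by left.
  by move=> j hj; have := nex2 j; rewrite hj.
pose v (t : R) i := u i * (if `|u i| == a then t / a else 1).
have an0 : a != 0 by rewrite gt_eqF.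
have nv t i : 0 <= t -> `|v t i| = if `|u i| == a then t else `|u i|.
  move=> t0; rewrite /v normrM; case: eqP => e; last by rewrite normr1 mulr1.
  rewrite e ger0_norm; last by rewrite divr_ge0 // ltW.
  by rewrite mulrC divfK.
have bv t : 0 <= t -> t <= 1 -> box (v t).
  by move=> t0 t1 i; rewrite nv //; case: eqP => // _; exact: hu.
pose l' := [seq x <- l | x != a].
have hl' : (size l' <= n)%N.
  have c1 : (0 < count (pred1 a) l)%N by rewrite -has_count has_pred1 hcov.
  have := count_predC (pred1 a) l.
  have -> : count (predC (pred1 a)) l = size l' by rewrite size_filter.
  move: hl c1.
  by move=> hl1 c2 h3; rewrite -ltnS (leq_trans _ hl1) // -h3 -{1}(add0n (size l')) ltn_add2r.
have cov1 : forall i, (0 < `|v 1 i|) && (`|v 1 i| < 1) -> `|v 1 i| \in l'.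
  move=> i; rewrite nv //; case: eqP => e; first by rewrite ltxx andbF.
  by move=> hi; rewrite mem_filter hcov // andbT; apply/eqP.
have covb : forall i, (0 < `|v b i|) && (`|v b i| < 1) -> `|v b i| \in l'.
  move=> i; rewrite nv //; case: eqP => e.
    move=> /andP[hb0 _]; case: hbex => [hb|[j hj]]; first by lra.
    rewrite mem_filter -hj hcov ?hj; last by apply/andP; split; lra.
    by rewrite andbT (lt_eqF ba).
  by move=> hi; rewrite mem_filter hcov // andbT; apply/eqP.
have [w1 hw1] := IH (v 1) l' (bv 1 ler01 (lexx 1)) hl' cov1.
have [w2 hw2] := IH (v b) l' (bv b b0 (ltW (lt_trans ba a1))) hl' covb.
pose lam := (a - b) / (1 - b).
have b1 : 0 < 1 - b by lra.
have lam0 : 0 <= lam by rewrite divr_ge0 //; lra.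
have lam1 : lam <= 1 by rewrite ler_pdivrMr // mul1r; lra.
have conv i : u i = lam * v 1 i + (1 - lam) * v b i.
  rewrite /v; case: eqP => e; last by rewrite !mulr1; ring.
  rewrite /lam; field; rewrite an0 /=; apply/eqP; lra.
have key : lam * exp_loss f p (v 1) + (1 - lam) * exp_loss f p (v b)
           <= exp_loss f p u.
  rewrite !phiE !mulr_sumr -big_split /=; apply: ler_sum => y _.
  have [sg hsg] := sort_ex (xx u y).
  have mono t : 0 <= t -> b <= t -> t <= 1 -> sortedp sg (xx (v t) y).
    move=> t0 bt t1 i j ij; have := hsg i j ij.
    rewrite !xx_box ?(bv t t0 t1) ?hu // => h.
    have hs (m : 'I_k) : v t m * sgn R (y m) =
        (u m * sgn R (y m)) *
        (if `|u m| == a then t / a else 1).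
      by rewrite /v mulrAC.
    rewrite !hs in h *.
    suff : u (sg i) * sgn R (y (sg i)) <= u (sg j) * sgn R (y (sg j)).
      move=> h'.
      have := @mono_aux _ a b t (u (sg i) * sgn R (y (sg i)))
                (u (sg j) * sgn R (y (sg j))) b0 ba a1 bt t1.
      rewrite !normrM !norm_sgn !mulr1 => H.
      have := H (hu _) (hbelow _) (habove _) (hu _) (hbelow _) (habove _) h'.
      by move=> HH; rewrite lerD2l lerN2; exact: HH.
    lra.
  have e2 : xx u y = (fun i => lam * xx (v 1) y i + (1 - lam) * xx (v b) y i).
    apply: boolp.funext => i; rewrite !xx_box ?(bv 1 ler01 (lexx 1))
      ?(bv b b0 (ltW (lt_trans ba a1))) ?hu // {1}(conv i); ring.
  have e1 : lam * lovasz_term f (xx (v 1) y) sg +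
      (1 - lam) * lovasz_term f (xx (v b) y) sg <= lovasz_ext f (xx u y).
    by rewrite -term_lin -e2; exact: ext_ge.
  rewrite (ext_greedy hsub (mono 1 ler01 (ltW (lt_trans ba a1)) (lexx 1))).
  rewrite (ext_greedy hsub (mono b b0 (lexx b) (ltW (lt_trans ba a1)))).
  have := hp y; nra.
have : exp_loss f p (v 1) <= exp_loss f p (v b) \/
       exp_loss f p (v b) <= exp_loss f p (v 1).
  by case: (lerP (exp_loss f p (v 1)) (exp_loss f p (v b))) => h; [left|right; apply: ltW].
case=> h.
  exists w1; apply: le_trans hw1 _; nra.
exists w2; apply: le_trans hw2 _; nra.
Qed.

End Main.

Unset Implicit Arguments.
Set Strict Implicit.

Theorem proposition1 (R : realType) (k : nat) (f : {set 'I_k} -> R)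
    (hf : in_Fk f) (p : {ffun {ffun 'I_k -> bool} -> R})
    (hp : is_distribution p) :
  exists v : 'I_k -> R, in_V v /\
    (forall u : 'I_k -> R, exp_loss f p v <= exp_loss f p u).
Proof.
case: hf => hsub hinc _; case: hp => hp0 _.
pose phi (w : {ffun 'I_k -> 'I_3}) := exp_loss f p (@enc R k w).
have [w0 [_ hw0]] := @exmax R _ xpredT (fun w => - phi w)
  (ex_intro _ [ffun=> ord0] isT).
exists (@enc R k w0); split.
  move=> i; rewrite /enc; case: (w0 i) => [[|[|[|m]]] h] //=.
  - by rewrite !inE sub0r eqxx.
  - by rewrite subrr !inE eqxx orbT.
  - have -> : 2%:R - 1 = 1 :> R by rewrite -natr1 addrK.
    by rewrite !inE eqxx !orbT.
move=> u.
pose l := [seq `|clip u i| | i <- enum 'I_k].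
have [w hw] := main_ind hsub hp0 (n := size l) (clip_box u) (leqnn _)
  (fun i _ => map_f _ (mem_enum _ i)).
apply: le_trans (clip_le hinc hp0 u); apply: le_trans hw.
by have := hw0 w isT; rewrite lerN2.
Qed.
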